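(* $\mathsf{Permutation}\in\mathsf{dAM}[O(\log n)]$, where in $\mathsf{Permutation}$ each node $u$ of the $n$-node communication graph holds a value $a_u\in\{1,\dots,n\}$ and the instance is in the language iff the values $(a_u)_{u\in V}$ are pairwise distinct (i.e. form a permutation of $\{1,\dots,n\}$).
   Context: Distributed interactive proofs (model). An instance consists of a connected communication graph $G=(V,E)$ with $|V|=n$, where each node has a unique identifier of $O(\log n)$ bits, knows $n$, knows its own identifier, its local input (if the problem has local inputs), and the identifiers of its neighbours (with an arbitrary port numbering of its incident edges). A prover, who sees the whole instance, interacts with all nodes in $r$ alternating messages. In a verifier (node) message each node independently samples fresh uniformly random bits and sends them to the prover (public coins). In a prover message the prover sends each node a string. Nodes may additionally exchange the strings they received from the prover with their neighbours in $G$. At the end each node deterministically accepts or rejects as a function of its local information, its own random bits, the strings it received from the prover and those its neighbours received; the instance is accepted iff all nodes accept. The proof size is the maximum number of bits in any single message between the prover and any node. A language $\mathcal L$ (set of instances) is in $\mathsf{dIP}[r,\ell]$ if there is an $r$-message protocol of proof size $\ell=\ell(n)$ such that (completeness) for every instance in $\mathcal L$ some prover makes all nodes accept with probability $>2/3$, and (soundness) for every instance not in $\mathcal L$ and every prover, all nodes accept with probability $<1/3$ (probabilities over the nodes' coins). $\mathsf{dAM}[\ell]$, $\mathsf{dMAM}[\ell]$, $\mathsf{dAMAM}[\ell]$, $\mathsf{dMAMAM}[\ell]$ denote the cases of 2, 3, 4, 5 messages, where the letters indicate who sends each message in order (A = nodes send random coins, M = prover). *)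

(* Defs.v *)
(* Model of distributed interactive proofs, dAM (2 messages: A then M). *)
From mathcomp Require Import all_boot.
Set Implicit Arguments. Unset Strict Implicit. Unset Printing Implicit Defensive.

Definition valid_graph (n : nat) (e : rel 'I_n) : Prop :=
  symmetric e /\ irreflexive e /\ (forall u v : 'I_n, connect e u v).

(* Port numbering: ports u lists the neighbours of u, each exactly once,
   in an arbitrary order (port i of u leads to the i-th element). *)
Definition valid_ports (n : nat) (e : rel 'I_n) (ports : 'I_n -> seq 'I_n) : Prop :=
  forall u, uniq (ports u) /\ (forall v, (v \in ports u) = e u v).

(* Unique identifiers of O(log n) bits: injective, with values below n ^ c. *)
Definition valid_ids (n c : nat) (id : 'I_n -> nat) : Prop :=
  injective id /\ (forall u, id u < n ^ c).

(* Arguments, in order: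
   n, own identifier, own local input, identifiers of the neighbours
   (in port order), own random bits, own prover string, prover strings
   received by the neighbours (in port order). *)
Definition decision := nat -> nat -> nat -> seq nat -> bitseq -> bitseq -> seq bitseq -> bool.

(* Public coins of all nodes: each node samples r uniformly random bits. *)
Definition coins (n r : nat) := {ffun 'I_n -> r.-tuple bool}.

Definition all_accept (n r : nat) (dec : decision) (ports : 'I_n -> seq 'I_n)
    (id : 'I_n -> nat) (a : 'I_n -> nat) (x : coins n r) (pf : 'I_n -> bitseq) : bool :=
  [forall u : 'I_n,
     dec n (id u) (a u) (map id (ports u)) (val (x u)) (pf u) (map pf (ports u))].

(* Number of coin outcomes on which the prover strategy P makes all nodes accept.
   P sees the whole instance (it is chosen per instance) and all the coins. *)
Definition acc_count (n r : nat) (dec : decision) (ports : 'I_n -> seq 'I_n)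
    (id : 'I_n -> nat) (a : 'I_n -> nat) (P : coins n r -> 'I_n -> bitseq) : nat :=
  #|[pred x : coins n r | all_accept dec ports id a x (P x)]|.

Definition bounded_prover (n r l : nat) (P : coins n r -> 'I_n -> bitseq) : Prop :=
  forall x u, size (P x u) <= l.

(* A language: a predicate on instances (n, graph, ports, identifiers, inputs). *)
Definition language :=
  forall n : nat, rel 'I_n -> ('I_n -> seq 'I_n) -> ('I_n -> nat) -> ('I_n -> nat) -> Prop.

(* For every polynomial identifier range n^c there is a protocol (coin length r n,
   decision rule dec) and a constant C with proof size l(n) = C * (log2 n + 1)
   bounding every message (random bits sent to the prover and prover strings);
   acceptance probabilities are counted over the uniform coin space. *)
Definition in_dAM_log (L : language)
    (inputs_ok : forall n : nat, ('I_n -> nat) -> Prop) : Prop :=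
  forall c : nat, exists (C : nat) (r : nat -> nat) (dec : decision),
    (forall n, r n <= C * (trunc_log 2 n).+1) /\
    forall (n : nat) (e : rel 'I_n) (ports : 'I_n -> seq 'I_n)
           (id : 'I_n -> nat) (a : 'I_n -> nat),
      0 < n -> valid_graph e -> valid_ports e ports -> valid_ids c id ->
      inputs_ok n a ->
      (L n e ports id a ->
         exists P : coins n (r n) -> 'I_n -> bitseq,
           @bounded_prover n (r n) (C * (trunc_log 2 n).+1) P /\
           2 * #|coins n (r n)| < 3 * @acc_count n (r n) dec ports id a P) /\
      (~ L n e ports id a ->
         forall P : coins n (r n) -> 'I_n -> bitseq,
           @bounded_prover n (r n) (C * (trunc_log 2 n).+1) P ->
           3 * @acc_count n (r n) dec ports id a P < #|coins n (r n)|).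

Definition permutation_lang : language :=
  fun n _ _ _ a => injective a.

Definition permutation_inputs (n : nat) (a : 'I_n -> nat) : Prop :=
  forall u, 1 <= a u <= n.

(* Main.v *)
Require Import Defs.
From mathcomp Require Import all_boot all_algebra all_field.
From mathcomp Require Import zify.
Set Implicit Arguments. Unset Strict Implicit. Unset Printing Implicit Defensive.
Import GRing.Theory.

Lemma telescope (I : finType) (F : fieldType) (w : I) (par : I -> I) (V f : I -> F) :
 (forall u, V u != 0%R) ->
 (forall u, V u = (f u * \prod_(c | (c != w) && (par c == u)) V c)%R) ->
 V w = (\prod_u f u)%R.
Proof.
move=> nz HV.
have E1 : (\prod_u V u = (\prod_u f u) * \prod_(c | c != w) V c)%R.
  rewrite (eq_bigr _ (fun u _ => HV u)) big_split /=; congr (_ * _)%R.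
  by rewrite [RHS](partition_big par (fun _ => true)).
have E2 : (\prod_u V u = V w * \prod_(c | c != w) V c)%R by rewrite (bigD1 w).
have nzP : (\prod_(c | c != w) V c != 0)%R by apply/prodf_neq0 => c _.
by apply: (mulIf nzP); rewrite -E2 E1.
Qed.

Lemma card_coord (I T : finType) (w : I) (S : {pred T}) :
  #|[pred x : {ffun I -> T} | x w \in S]| = #|S| * #|T| ^ #|I|.-1.
Proof.
pose Fm := fun u : I => if u == w then mem S else mem (@predT T).
have -> : #|[pred x : {ffun I -> T} | x w \in S]| = #|family Fm|.
  apply: eq_card => x; apply/idP/familyP => /=.
    by move=> Hx u; rewrite /Fm; case: eqP => [->|].
  by move/(_ w); rewrite /Fm eqxx.
rewrite card_family.
have -> : foldr muln 1 [seq #|Fm x| | x : I] = \prod_(x : I) #|Fm x|.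
  rewrite /image_mem -big_enum /=.
  by elim: (enum I) => [|i s IH] /=; rewrite ?big_nil ?big_cons ?IH.
rewrite (bigD1 w) //= {1}/Fm eqxx; congr (_ * _).
rewrite (eq_bigr (fun _ => #|T|)); last first.
  by move=> u /negbTE; rewrite /Fm => ->; apply: eq_card.
by rewrite prod_nat_const cardC1.
Qed.

Fixpoint n2b (w m : nat) : bitseq := if w is w'.+1 then odd m :: n2b w' m./2 else [::].
Fixpoint b2n (s : bitseq) : nat := if s is b :: s' then b + (b2n s').*2 else 0.

Lemma size_n2b w m : size (n2b w m) = w.
Proof. by elim: w m => [|w IH] m //=; rewrite IH. Qed.

Lemma n2bK w m : m < 2 ^ w -> b2n (n2b w m) = m.
Proof.
elim: w m => [|w IH] m /=; first by rewrite expn0 ltnS leqn0 => /eqP ->.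
move=> Hm; rewrite IH ?odd_double_half //.
rewrite -ltn_double -(ltn_add2l (odd m)) odd_double_half -muln2 -expnSr.
by apply: (leq_trans Hm); rewrite leq_addl.
Qed.

Definition enc (W : nat) (ms : seq nat) : bitseq := flatten (map (n2b W) ms).
Definition fld (W i : nat) (s : bitseq) : nat := b2n (take W (drop (i * W) s)).

Lemma size_enc W ms : size (enc W ms) = size ms * W.
Proof. by elim: ms => [|m ms IH] //=; rewrite /enc /= size_cat size_n2b -/(enc W ms) IH mulSn. Qed.

Lemma fld_enc W ms i : i < size ms -> nth 0 ms i < 2 ^ W -> fld W i (enc W ms) = nth 0 ms i.
Proof.
rewrite /fld; elim: ms i => [|m ms IH] [|i] //= Hi Hm.
  by rewrite /enc /= drop0 take_size_cat ?size_n2b // n2bK.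
rewrite /enc /= mulSn drop_cat size_n2b ltnNge leq_addr /= addKn.
exact: IH.
Qed.

Definition Lg n := trunc_log 2 n.
Definition kk n := (Lg n).+1.*2.+2.
Lemma pr2 : prime 2. Proof. by []. Qed.
Lemma kk_gt0 n : 0 < kk n. Proof. by []. Qed.
Definition Fld n : finFieldType := s2val (pPrimePowerField pr2 (kk_gt0 n)).
Lemma card_Fld n : #|Fld n| = 2 ^ kk n.
Proof. exact: (s2valP' (pPrimePowerField pr2 (kk_gt0 n))). Qed.
Lemma card_T n : #|{: (kk n).-tuple bool}| = #|Fld n|.
Proof. by rewrite card_tuple card_bool card_Fld. Qed.

Definition toF n m : Fld n := nth 0%R (enum (Fld n)) m.
Definition ofF n (y : Fld n) : nat := index y (enum (Fld n)).
Lemma ofFK n : cancel (@ofF n) (@toF n).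
Proof. by move=> y; rewrite /toF /ofF nth_index ?mem_enum. Qed.
Lemma ofF_lt n (y : Fld n) : ofF y < 2 ^ kk n.
Proof. by rewrite -card_Fld cardE /ofF index_mem mem_enum. Qed.
Lemma toF_inj n i j : i < 2 ^ kk n -> j < 2 ^ kk n -> @toF n i = toF n j -> i = j.
Proof.
move=> Hi Hj; rewrite /toF => /eqP; rewrite nth_uniq ?enum_uniq -?cardE ?card_Fld //.
by move/eqP.
Qed.

Definition gtu n (t : (kk n).-tuple bool) : Fld n := enum_val (cast_ord (card_T n) (enum_rank t)).
Lemma gtu_inj n : injective (@gtu n).
Proof.
move=> t1 t2 /enum_val_inj /(congr1 val) /= /val_inj; exact: enum_rank_inj.
Qed.
Definition gco n (s : bitseq) : Fld n := gtu (insubd (nseq_tuple (kk n) false) s).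
Lemma gco_val n (t : (kk n).-tuple bool) : gco n (val t) = gtu t.
Proof. by rewrite /gco valKd. Qed.

Section Dec.
Variable c : nat.
Definition WW n := c.+2 * (Lg n).+1 + 2.
Variable n : nat.
Definition zf s : Fld n := toF n (fld (WW n) 0 s).
Definition Rf s := fld (WW n) 1 s.
Definition df s := fld (WW n) 2 s.
Definition pdf s := fld (WW n) 3 s.
Definition Vf s : Fld n := toF n (fld (WW n) 4 s).
Definition Qv (z : Fld n) : Fld n := (\prod_(j <- iota 1 n) (z - toF n j))%R.
Definition dec0 (idu au : nat) (nids : seq nat) (coin s : bitseq) (ns : seq bitseq) : bool :=
 [&& all (fun t => zf t == zf s) ns, all (fun t => Rf t == Rf s) ns,
   (df s == 0) ==> [&& idu == Rf s, zf s == gco n coin & Vf s == Qv (zf s)],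
   (0 < df s) ==> has (fun p => (p.1 == pdf s) && (df p.2 == (df s).-1)) (zip nids ns),
   (Vf s != 0)%R &
   Vf s == ((zf s - toF n au) * \prod_(p <- zip nids ns | (pdf p.2 == idu) && (df p.2 == (df s).+1)) Vf p.2)%R].
End Dec.
Definition dec (c : nat) : decision := fun n => dec0 c n.

Lemma const_conn (T : finType) (X : Type) (e : rel T) (f : T -> X) u v :
  (forall u v, e u v -> f v = f u) -> connect e u v -> f v = f u.
Proof.
move=> H /connectP [p Hp ->]; elim: p u Hp => [|y p IH] u //= /andP [Huy Hp].
by rewrite (IH y Hp) (H _ _ Huy).
Qed.

Lemma big_ports (T : finType) (R : Type) (idx : R) (op : Monoid.com_law idx) (r : seq T) (P Q : pred T) (F : T -> R) :
  uniq r -> (forall v, (v \in r) && P v = Q v) ->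
  \big[op/idx]_(v <- r | P v) F v = \big[op/idx]_(v | Q v) F v.
Proof.
move=> Ur HPQ; rewrite big_mkcond [RHS]big_mkcond (big_uniq _ Ur) /= [RHS](bigID (mem r)) /=.
rewrite [X in op _ X]big1 ?Monoid.mulm1; last by move=> v /negbTE Hv; rewrite -HPQ Hv.
by apply: eq_bigr => v Hv; rewrite -HPQ Hv.
Qed.

Lemma and6B (b1 b2 b3 b4 b5 b6 : bool) : [&& b1, b2, b3, b4, b5 & b6] -> b1 /\ b2 /\ b3 /\ b4 /\ b5 /\ b6.
Proof. by case/and5P => -> -> -> -> /andP [-> ->]. Qed.

Lemma sound_core c n (e : rel 'I_n) ports (id : 'I_n -> nat) (a : 'I_n -> nat)
  (x : coins n (kk n)) (pf : 'I_n -> bitseq) :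
 0 < n -> valid_graph e -> valid_ports e ports -> injective id ->
 all_accept (dec c) ports id a x pf ->
 exists m : 'I_n, Qv (gtu (x m)) = (\prod_u (gtu (x m) - toF n (a u)))%R.
Proof.
move=> n0 [esym [eirr econ]] vp idinj /forallP acc.
have Acc := acc.
pose Z u := zf c n (pf u); pose R u := Rf c n (pf u); pose Dd u := df c n (pf u).
pose Pd u := pdf c n (pf u); pose V u := Vf c n (pf u).
have memp u v : (v \in ports u) = e u v by case: (vp u).
have Zc u v : Z v = Z u.
  apply: (const_conn (e := e)) => // u' v' Huv.
  move: (Acc u'); rewrite /dec /dec0 /= zip_map; move/and6B => [/allP H _]; apply/eqP; apply: H.
  by apply/mapP; exists v' => //; rewrite memp.
have Rc u v : R v = R u.
  apply: (const_conn (e := e)) => // u' v' Huv.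
  move: (Acc u'); rewrite /dec /dec0 /= zip_map; move/and6B => [_ [/allP H _]]; apply/eqP; apply: H.
  by apply/mapP; exists v' => //; rewrite memp.
pose u0 : 'I_n := Ordinal n0.
have [m _ Hmin] := @arg_minnP _ u0 predT Dd isT.
have Dm : Dd m = 0.
  apply/eqP; apply: contraT; rewrite -lt0n => Hpos.
  move: (Acc m); rewrite /dec /dec0 /= zip_map; move/and6B => [_ [_ [_ [/implyP /(_ Hpos) Hh _]]]]; move: Hh => /hasP [[i t] /mapP [p Hp [-> ->]]] /=.
  case/andP=> _ /eqP Hdp; have := Hmin p isT; rewrite /Dd Hdp.
  by move: Hpos; rewrite /Dd; case: (df c n (pf m)) => // k _; rewrite ltnn.
have [Hidm Hzm HVm] : [/\ id m = R m, Z m = gco n (val (x m)) & V m = Qv (Z m)].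
  move: (Acc m); rewrite /dec /dec0 /= zip_map; move/and6B => [_ [_ [/implyP + _]]]; rewrite -/(Dd m) Dm eqxx => /(_ isT).
  by case/and3P=> /eqP H1 /eqP H2 /eqP H3; split.
have root_uniq u : Dd u = 0 -> u = m.
  move=> Du; apply: idinj; rewrite Hidm -(Rc m u).
  move: (Acc u); rewrite /dec /dec0 /= zip_map; move/and6B => [_ [_ [/implyP + _]]]; rewrite -/(Dd u) Du eqxx => /(_ isT).
  by case/and3P=> /eqP.
pose par u := if [pick p | e u p && (id p == Pd u) && (Dd p == (Dd u).-1)] is Some p then p else u.
have parP u : u != m -> [/\ e u (par u), id (par u) = Pd u & Dd (par u) = (Dd u).-1].
  move=> Hu; have Hpos : 0 < Dd u by rewrite lt0n; apply: contra Hu => /eqP /root_uniq ->.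
  rewrite /par; case: pickP => [p /andP [/andP [H1 /eqP H2] /eqP H3]|Hno] //.
  move: (Acc u); rewrite /dec /dec0 /= zip_map; move/and6B => [_ [_ [_ [/implyP /(_ Hpos) Hh _]]]]; move: Hh => /hasP [[i t] /mapP [p Hp [-> ->]]] /=.
  case/andP=> /eqP H2 /eqP H3; have := Hno p; rewrite /= -memp Hp /Pd /Dd H2 H3 !eqxx //.
have HV u : V u = ((Z m - toF n (a u)) * \prod_(v | (v != m) && (par v == u)) V v)%R.
  move: (Acc u); rewrite /dec /dec0 /= zip_map; move/and6B => [_ [_ [_ [_ [_ /eqP HH]]]]]; rewrite /V HH -/(Z u); rewrite (Zc m u) big_map /=.
  congr (_ * _)%R; apply: big_ports; first by case: (vp u).
  move=> v; rewrite memp; apply/idP/idP.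
    case/andP=> Huv /andP [/eqP H1 /eqP H2].
    have Hvm : v != m by apply/eqP => Hv; move: H2; rewrite Hv -/(Dd m) Dm.
    apply/andP; split => //; case: (parP v Hvm) => _ H3 _; apply/eqP/idinj.
    by rewrite H3 -H1.
  case/andP=> Hvm /eqP Hpv; case: (parP v Hvm); rewrite Hpv => H1 H2 H3.
  rewrite esym H1 /= -/(Pd v) -H2 eqxx /= -/(Dd v) -/(Dd u) H3 prednK //.
  by rewrite lt0n; apply: contra Hvm => /eqP /root_uniq ->.
exists m; rewrite -gco_val -Hzm -HVm.
apply: (telescope (w := m) (par := par)) => u; last exact: HV.
by move: (Acc u); rewrite /dec /dec0 /= zip_map; move/and6B => [_ [_ [_ [_ [H _]]]]].
Qed.

Lemma missing n (a : 'I_n -> nat) : (forall u, 1 <= a u <= n) -> ~ injective a ->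
  exists k, [/\ 1 <= k <= n & forall u, a u != k].
Proof.
case: n a => [|n] a Ha Hinj; first by exfalso; apply: Hinj => [[]].
case: (boolP [exists k : 'I_n.+1, [forall u, a u != k.+1]]) => [/existsP [k /forallP Hk]|].
  by exists k.+1; split => //; apply: ltn_ord.
move=> Hno; have Hall (k : 'I_n.+1) : ~~ [forall u, a u != k.+1].
  by apply: contra Hno => H; apply/existsP; exists k.
exfalso; apply: Hinj.
pose b (u : 'I_n.+1) : 'I_n.+1 := inord (a u).-1.
have bv u : nat_of_ord (b u) = (a u).-1.
  by rewrite /b inordK //; case/andP: (Ha u) => H1 H2; case: (a u) H1 H2 => //= k _ H.
have Hsurj k : k \in [seq b x | x in 'I_n.+1].
  have := Hall k; rewrite negb_forall => /existsP [u]; rewrite negbK => /eqP Hu.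
  by apply/imageP; exists u => //; apply: val_inj => /=; rewrite bv Hu.
have Hc : #|[seq b x | x in 'I_n.+1]| == #|'I_n.+1|.
  rewrite eqn_leq leq_image_card /=; apply: subset_leq_card; apply/subsetP => k _; exact: Hsurj.
move/image_injP: Hc => Hbinj u v Huv.
apply: Hbinj => //; apply: val_inj => /=; rewrite !bv Huv //.
Qed.

Lemma toF_iota_ne n (a : 'I_n -> nat) k : (forall u, 1 <= a u <= n) -> k <= n -> (forall u, a u != k) ->
  forall u, toF n k != toF n (a u).
Proof.
move=> Ha Hk Hu u.
have Hn : n < 2 ^ kk n.
  apply: (leq_trans (trunc_log_ltn n (isT : 1 < 2))); rewrite leq_exp2l // /kk /Lg -addnn.
  lia.
apply/eqP => /toF_inj H; move: (Hu u); rewrite H ?eqxx //.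
  by apply: leq_ltn_trans Hn.
by apply: leq_ltn_trans Hn; case/andP: (Ha u).
Qed.

Lemma bad_card n (a : 'I_n -> nat) : (forall u, 1 <= a u <= n) -> ~ injective a ->
  #|[set y : Fld n | Qv y == (\prod_u (y - toF n (a u)))%R]| <= n.
Proof.
move=> Ha Hinj; have [k [/andP [k1 kn] Hk]] := missing Ha Hinj.
pose P : {poly Fld n} := (\prod_(y <- [seq toF n (a u) | u <- enum 'I_n]) ('X - y%:P))%R.
pose Q : {poly Fld n} := (\prod_(y <- [seq toF n j | j <- iota 1 n]) ('X - y%:P))%R.
have EP y : P.[y]%R = (\prod_u (y - toF n (a u)))%R.
  by rewrite /P horner_prod big_map big_enum /=; apply: eq_bigr => u _; rewrite hornerXsubC.
have EQ y : Q.[y]%R = Qv y.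
  by rewrite /Q horner_prod big_map /Qv; apply: eq_bigr => j _; rewrite hornerXsubC.
pose D := (P - Q)%R.
have D0 : D != 0%R.
  apply/eqP => /(congr1 (fun p => p.[toF n k]%R)); rewrite /D hornerD hornerN EP EQ horner0.
  have -> : Qv (toF n k) = 0%R.
    rewrite /Qv (bigD1_seq k) /= ?subrr ?mul0r ?iota_uniq // mem_iota k1 /=.
    by rewrite addnC addn1 ltnS.
  rewrite subr0 => /eqP; rewrite prodf_seq_eq0 => /hasP [u _ /=].
  by rewrite subr_eq0 (negbTE (toF_iota_ne Ha kn Hk u)).
have sD : size D <= n.+1.
  rewrite /D (leq_trans (size_polyD _ _)) // size_polyN /P /Q !size_prod_XsubC !size_map size_iota.
  by rewrite -enumT size_enum_ord maxnn.
rewrite -ltnS cardE; apply: leq_trans sD; apply: max_poly_roots => //; last exact: enum_uniq.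
apply/allP => y; rewrite mem_enum inE => /eqP Hy.
by rewrite /root /D hornerD hornerN EP EQ Hy subrr.
Qed.

Lemma card_exists (I T : finType) (P : I -> pred T) :
  #|[pred x | [exists w, P w x]]| <= \sum_w #|P w|.
Proof.
rewrite -sum1_card.
apply: (@leq_trans (\sum_x \sum_w (P w x : nat))).
  rewrite big_mkcond /=; apply: leq_sum => x _; case: ifP => // /existsP [w Hw].
  by rewrite (bigD1 w) //= Hw.
rewrite exchange_big /=; apply: leq_sum => w _.
rewrite -sum1_card [X in _ <= X]big_mkcond /=; apply: leq_sum => x _. by rewrite unfold_in; case: (P w x).
Qed.

Lemma card_inj_pre (T F : finType) (g : T -> F) (B : {pred F}) :
  injective g -> #|T| = #|F| -> #|[pred t | g t \in B]| = #|B|.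
Proof.
move=> ginj cTF; rewrite -(card_image ginj); apply: eq_card => y.
apply/imageP/idP => [[t Ht ->] //|Hy].
have /codomP [t Ht] := inj_card_onto ginj (eq_leq (esym cTF)) y.
by exists t; rewrite // inE -Ht.
Qed.

Lemma bfs (T : finType) (e : rel T) (w : T) : symmetric e -> (forall u, connect e u w) ->
  exists d : T -> nat, [/\ d w = 0, forall u, d u < #|T|, forall u, d u = 0 -> u = w &
     forall u, 0 < d u -> exists p, e u p && (d p == (d u).-1)].
Proof.
move=> esym con.
pose Pk (u : T) k := [exists t : k.-tuple T, path e u t && (last u t == w)].
have ex u : exists k, Pk u k.
  have /connectP [p Hp Hl] := con u.
  by exists (size p); apply/existsP; exists (in_tuple p); rewrite /= Hp -Hl eqxx.
pose d u := ex_minn (ex u).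
have dP u : Pk u (d u) by rewrite /d; case: ex_minnP.
have dmin u k : Pk u k -> d u <= k by rewrite /d; case: ex_minnP => m _ H; apply: H.
exists d; split.
- apply/eqP; rewrite -leqn0; apply: dmin; apply/existsP; exists [tuple]; by rewrite /= eqxx.
- move=> u; have /connectP [p Hp Hl] := con u.
  move: Hl; case/shortenP: Hp => p' Hp' Hu' _ Hl.

  apply: (@leq_ltn_trans (size p')).
    by apply: dmin; apply/existsP; exists (in_tuple p'); rewrite /= Hp' -Hl eqxx.
  by rewrite -ltnS -[(size p').+1]/(size (u :: p')) -(card_uniqP Hu') ltnS max_card.
- move=> u Hu; have := dP u; rewrite Hu => /existsP [t]; rewrite tuple0 /= => /eqP //.
- move=> u Hpos; have := dP u; move=> /existsP [t /andP [Hpt /eqP Hl]].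
  case: t Hpt Hl => [[|y p] Hs] //=; first by move: Hs Hpos => /= /eqP <-.
  case/andP=> Huy Hp Hl; exists y; rewrite Huy /=.
  have Hs' : size p = (d u).-1 by move: Hs => /eqP /= <-.
  have H1 : d y <= (d u).-1 by rewrite -Hs'; apply: dmin; apply/existsP; exists (in_tuple p); rewrite /= Hp Hl eqxx.
  have H2 : d u <= (d y).+1.
    have /existsP [t' /andP [Ht' Hl']] := dP y.
    apply: dmin; apply/existsP; exists [tuple of y :: t']; rewrite /= Huy Ht' Hl' //.
  by rewrite eqn_leq H1 /=; move: H2 Hpos; case: (d u).
Qed.

Lemma perm_prod n (a : 'I_n -> nat) (R : comNzRingType) (f : nat -> R) :
  injective a -> (forall u, 1 <= a u <= n) -> (\prod_u f (a u) = \prod_(j <- iota 1 n) f j)%R.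
Proof.
move=> ainj Ha; rewrite -big_enum /= -(big_map a predT f) /=; apply: perm_big.
have U : uniq [seq a u | u <- enum 'I_n] by rewrite map_inj_uniq ?enum_uniq.
have S : {subset [seq a u | u <- enum 'I_n] <= iota 1 n}.
  move=> j /mapP [u _ ->]; rewrite mem_iota; case/andP: (Ha u) => -> /=; lia.
have Hs : size (iota 1 n) <= size [seq a u | u <- enum 'I_n] by rewrite size_iota size_map size_enum_ord.
have [_ Heq] := uniq_min_size U S Hs.
by apply: uniq_perm => //; apply: iota_uniq.
Qed.

Fixpoint Vfu (T : Type) (R : nzRingType) (f : T -> R) (ch : T -> seq T) (s : nat) (u : T) : R :=
  if s is s'.+1 then (f u * \prod_(v <- ch u) Vfu f ch s' v)%R else 1%R.

Lemma Vfu_neq0 (T : Type) (R : fieldType) (f : T -> R) ch s u :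
  (forall u, f u != 0%R) -> Vfu f ch s u != 0%R.
Proof.
move=> Hf; elim: s u => [|s IH] u /=; first exact: oner_neq0.
rewrite mulf_neq0 //; apply: (big_ind (fun x => x != 0%R)) => //; [exact: oner_neq0 | by move=> x y; apply: mulf_neq0].
Qed.

Lemma nlt n : n < 2 ^ (Lg n).+1.
Proof. exact: trunc_log_ltn. Qed.

Lemma bounds c n : [/\ 2 ^ kk n <= 2 ^ WW c n, n ^ c <= 2 ^ WW c n & n <= 2 ^ WW c n].
Proof.
have h1 : kk n <= WW c n by rewrite /kk /WW -addnn; nia.
have hn := nlt n.
have h2 : n ^ c <= 2 ^ WW c n.
  apply: (@leq_trans (2 ^ ((Lg n).+1 * c))).
    rewrite expnM; case: c {h1} => [|c]; first by rewrite !expn0.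
    by rewrite leq_exp2r // ltnW.
  by rewrite leq_exp2l // /WW; nia.
split => //; first by rewrite leq_exp2l.
apply: ltnW; apply: (leq_trans hn); rewrite leq_exp2l // /WW; nia.
Qed.

Lemma complete_core c n (e : rel 'I_n) ports (id : 'I_n -> nat) (a : 'I_n -> nat) :
 0 < n -> valid_graph e -> valid_ports e ports -> valid_ids c id -> @permutation_inputs n a -> injective a ->
 exists w0 : 'I_n, exists P : coins n (kk n) -> 'I_n -> bitseq,
  (forall x u, size (P x u) = 5 * WW c n) /\
  forall x : coins n (kk n), gtu (x w0) \notin [seq toF n j | j <- iota 1 n] ->
     all_accept (dec c) ports id a x (P x).
Proof.
move=> n0 [esym [eirr econ]] vp [idinj idlt] Ha ainj.
have memp u v : (v \in ports u) = e u v by case: (vp u).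
pose w0 : 'I_n := Ordinal n0.
have [d [dw dlt d0 dpar]] := bfs esym (fun u => econ u w0).
rewrite card_ord in dlt.
pose par0 u := if [pick p | e u p && (d p == (d u).-1)] is Some p then p else u.
have par0P u : 0 < d u -> e u (par0 u) /\ d (par0 u) = (d u).-1.
  move=> Hpos; rewrite /par0; case: pickP => [p /andP [H1 /eqP H2] //|Hno].
  by have [p Hp] := dpar u Hpos; have := Hno p; rewrite Hp.
exists w0.
pose ch u := [seq v <- ports u | (id (par0 v) == id u) && (d v == (d u).+1)].
pose Vh (x : coins n (kk n)) u := Vfu (fun u => gtu (x w0) - toF n (a u))%R ch (n - d u) u.
pose W := WW c n.
pose cert (x : coins n (kk n)) u := enc W [:: ofF (gtu (x w0)); id w0; d u; id (par0 u); ofF (Vh x u)].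
exists cert; split; first by move=> x u; rewrite size_enc.
have [b1 b2 b3] := bounds c n.
have lt1 (y : Fld n) : ofF y < 2 ^ W by apply: leq_trans b1; exact: ofF_lt.
have lt2 u : id u < 2 ^ W by apply: leq_trans b2; exact: idlt.
have lt3 u : d u < 2 ^ W by apply: leq_trans b3; exact: dlt.
move=> x Hx.
pose z := gtu (x w0).
have zfE u : zf c n (cert x u) = z by rewrite /zf fld_enc /= ?lt1 ?ofFK.
have RfE u : Rf c n (cert x u) = id w0 by rewrite /Rf fld_enc /= ?lt2.
have dfE u : df c n (cert x u) = d u by rewrite /df fld_enc /= ?lt3.
have pdfE u : pdf c n (cert x u) = id (par0 u) by rewrite /pdf fld_enc /= ?lt2.
have VfE u : Vf c n (cert x u) = Vh x u by rewrite /Vf fld_enc /= ?lt1 ?ofFK.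
have fnz u : (z - toF n (a u))%R != 0%R.
  rewrite subr_eq0; apply: contra Hx => /eqP Hz; rewrite -/z Hz; apply: map_f.
  by rewrite mem_iota; case/andP: (Ha u) => -> /=; lia.
have Vnz u : Vh x u != 0%R by apply: Vfu_neq0.
have Veq u : Vh x u = ((z - toF n (a u)) * \prod_(v <- ch u) Vh x v)%R.
  rewrite /Vh -(subnSK (dlt u)) /=; congr (_ * _)%R.
  apply: eq_big_seq => v; rewrite mem_filter => /andP [/andP [_ /eqP ->] _].
  by [].
have chE u : (\prod_(v <- ch u) Vh x v = \prod_(v | (v != w0) && (par0 v == u)) Vh x v)%R.
  rewrite big_filter; apply: big_ports; first by case: (vp u).
  move=> v; rewrite memp; apply/idP/idP.
    case/andP=> Huv /andP [/eqP H1 /eqP H2].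
    have Hpos : 0 < d v by rewrite H2.
    have Hvw : v != w0 by apply/eqP => Hv; move: Hpos; rewrite Hv dw.
    by rewrite Hvw /=; apply/eqP/idinj.
  case/andP=> Hvw /eqP Hpv.
  have Hpos : 0 < d v by rewrite lt0n; apply: contra Hvw => /eqP /d0 ->.
  case: (par0P v Hpos); rewrite Hpv => H1 H2.
  by rewrite esym H1 eqxx H2 (prednK Hpos) eqxx.
have Vw0 : Vh x w0 = Qv z.
  rewrite (telescope (w := w0) (par := par0) (V := Vh x) (f := fun u => z - toF n (a u))%R) //.
    by rewrite /Qv (perm_prod (fun j => z - toF n j)%R ainj Ha).
  by move=> u; rewrite Veq chE.
apply/forallP => u; rewrite /dec /dec0 /= zip_map.
apply/and5P; split.
- by rewrite all_map; apply/allP => v _ /=; rewrite !zfE.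
- by rewrite all_map; apply/allP => v _ /=; rewrite !RfE.
- apply/implyP; rewrite dfE => /eqP /d0 ->.
  by rewrite RfE zfE VfE gco_val Vw0 !eqxx.
- apply/implyP; rewrite dfE => Hpos; apply/hasP.
  case: (par0P u Hpos) => H1 H2.
  exists (id (par0 u), cert x (par0 u)); first by apply: map_f; rewrite memp.
  by rewrite /= pdfE dfE H2 !eqxx.
- rewrite VfE Vnz /= zfE Veq big_map big_filter.
  apply/eqP; congr (_ * _)%R; apply: eq_big => v; first by rewrite /= pdfE !dfE.
  by rewrite VfE.
Qed.

Lemma qbig n : 0 < n -> 4 * n * n < 2 ^ kk n.
Proof.
move=> n0; have hn := nlt n.
have -> : 2 ^ kk n = 4 * (2 ^ (Lg n).+1 * 2 ^ (Lg n).+1).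
  rewrite -expnD /kk -addnn -[4]/(2 ^ 2) -expnD. congr (2 ^ _); lia.
rewrite -mulnA ltn_pmul2l //; apply: (@leq_ltn_trans (n * 2 ^ (Lg n).+1)).
  by rewrite leq_mul2l ltnW ?orbT.
by rewrite ltn_pmul2r // expn_gt0.
Qed.

Lemma card_coins n : 0 < n -> #|{: coins n (kk n)}| = 2 ^ kk n * (2 ^ kk n) ^ n.-1.
Proof.
move=> n0; rewrite card_ffun card_T card_Fld card_ord.
by case: n n0 => [|n] // _; rewrite expnS.
Qed.

Theorem theorem1p3 : in_dAM_log permutation_lang permutation_inputs.
Proof.
move=> c; exists (5 * c.+4), kk, (dec c); split.
  by move=> n; rewrite /kk /Lg -addnn; nia.
move=> n e ports id a n0 vg vp vi Ha.
have q4 := qbig n0.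
set q := 2 ^ kk n in q4.
have K0 : 0 < q ^ n.-1 by rewrite expn_gt0 /q expn_gt0.
set K := q ^ n.-1 in K0.
have Tq : #|{: (kk n).-tuple bool}| = q by rewrite card_T card_Fld.
split.
  move=> ainj; have [w0 [P [Psz Pacc]]] := complete_core n0 vg vp vi Ha ainj.
  exists P; split.
    by move=> x u; rewrite Psz /WW /Lg; nia.
  pose A := [seq toF n j | j <- iota 1 n].
  have H1 : #|[pred x : coins n (kk n) | x w0 \in [pred t | gtu t \in [pred y : Fld n | y \notin A]]]| <= acc_count (dec c) ports id a P.
    by apply: subset_leq_card; apply/subsetP => x; rewrite !inE => /Pacc.
  rewrite card_coord (@card_inj_pre _ _ (@gtu n) _ (@gtu_inj n)) ?Tq ?card_Fld ?card_ord -/K in H1.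
  have HA : #|[pred y : Fld n | y \in A]| <= n.
    by apply: (leq_trans (card_size A)); rewrite size_map size_iota.
  have HC := cardC [pred y : Fld n | y \in A]; rewrite card_Fld -/q in HC.
  have HB : #|[pred y : Fld n | y \notin A]| = q - #|[pred y : Fld n | y \in A]|.
    by rewrite -HC addKn; apply: eq_card => y.
  rewrite HB in H1; rewrite (card_coins n0) -/q -/K.
  apply: (@leq_trans (3 * ((q - #|[pred y : Fld n | y \in A]|) * K))); last by rewrite leq_mul2l H1 orbT.
  set m := #|_| in HA *.
  have h : 3 * m < q by nia.
  clearbody q K m; rewrite [2 * _]mulnA [3 * _]mulnA ltn_pmul2r //; lia.
  by [].
move=> Hninj P Pb.
pose B := [set y : Fld n | Qv y == (\prod_u (y - toF n (a u)))%R].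
have HB : #|B| <= n by apply: bad_card.
have H1 : acc_count (dec c) ports id a P <= #|[pred x : coins n (kk n) | [exists w, x w \in [pred t | gtu t \in B]]]|.
  apply: subset_leq_card; apply/subsetP => x; rewrite !inE => Hacc.
  have [m Hm] := sound_core n0 vg vp (proj1 vi) Hacc.
  by apply/existsP; exists m; rewrite !inE Hm eqxx.
have H2 := card_exists (fun w => [pred x : coins n (kk n) | x w \in [pred t | gtu t \in B]]).
rewrite (eq_bigr (fun _ => #|B| * K)) in H2; last first.
  by move=> w _; rewrite card_coord (@card_inj_pre _ _ (@gtu n) _ (@gtu_inj n)) ?Tq ?card_Fld ?card_ord.
rewrite sum_nat_const card_ord in H2.
rewrite (card_coins n0) -/q -/K.
apply: (@leq_ltn_trans (3 * (n * (#|B| * K)))).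
  by rewrite leq_mul2l (leq_trans H1) ?orbT //.
set b := #|B| in HB *; clearbody q K b; rewrite !mulnA ltn_pmul2r //; nia.
Qed.
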